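(* Let $q\ge2$ be even, $n\ge1$, $p\ge1$, let $\sigma$ be a permutation of $\mathbb{Z}_2^n$, and let $g:\mathbb{Z}_2^n\to\mathbb{Z}_q$ satisfy $g(y)\equiv\sum_{j=0}^{p-1}2^ja_j(y)\pmod q$ for Boolean functions $a_0,\dots,a_{p-1}$ on $\mathbb{Z}_2^n$. Let $f:\mathbb{Z}_2^n\times\mathbb{Z}_2^n\to\mathbb{Z}_q$, $f(x,y)=\frac q2\,x\cdot\sigma(y)+g(y)$, and for $i\in\{0,\dots,2^p-1\}$ let $g_i(x,y)=x\cdot\sigma(y)\oplus z_{i,0}a_0(y)\oplus\cdots\oplus z_{i,p-1}a_{p-1}(y)$, a Boolean function on $\mathbb{Z}_2^{2n}$. Then every $g_i$ is bent, and for every $u\in\mathbb{Z}_2^{2n}$ there exist $r\in\{0,\dots,2^p-1\}$ and $\epsilon\in\{\pm1\}$ with $(W_{g_0}(u),\dots,W_{g_{2^p-1}}(u))=\epsilon H^{(r)}_{2^p}$. Equivalently, for every $u$, every $t\in\{1,\dots,p\}$ and every $i\in\{0,\dots,2^{t-1}-1\}$, the product $W_{g_i}(u)W_{g_{i+2^{t-1}}}(u)\in\{\pm1\}$ depends only on $u$ and $t$ (not on $i$).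
   Context: For $i\in\{0,\dots,2^m-1\}$, $z_i=(z_{i,0},\dots,z_{i,m-1})\in\mathbb{Z}_2^m$ is the binary vector with $i=\sum_j z_{i,j}2^j$. $H_{2^m}$ is the Sylvester–Hadamard matrix with entries $(H_{2^m})_{k,i}=(-1)^{z_k\cdot z_i}$, and $H^{(r)}_{2^m}$ its $r$-th row. For a Boolean function $G$ on $\mathbb{Z}_2^{N}$, $W_G(u)=2^{-N/2}\sum_{v\in\mathbb{Z}_2^N}(-1)^{G(v)\oplus u\cdot v}$, and $G$ is bent if $|W_G(u)|=1$ for all $u$. *)

(* Defs.v *)
From HB Require Import structures.
From mathcomp Require Import all_boot all_order all_algebra all_fingroup all_field.
Set Implicit Arguments. Unset Strict Implicit. Unset Printing Implicit Defensive.
Import Order.TTheory GRing.Theory Num.Theory.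
Local Open Scope ring_scope.

(* Z_2^N as boolean vectors indexed by 'I_N *)
Definition bvec (N : nat) := {ffun 'I_N -> bool}.

Definition bdot (N : nat) (x y : bvec N) : bool :=
  \big[addb/false]_(k < N) (x k && y k).

(* z_{i,j}: j-th binary digit of i  (i = sum_j z_{i,j} 2^j) *)
Definition zbit (i j : nat) : bool := odd (i %/ 2 ^ j).

Definition hadamard (m k i : nat) : algC :=
  (-1) ^+ (\big[addb/false]_(j < m) (zbit k j && zbit i j) : nat).

Definition walsh (N : nat) (G : bvec N -> bool) (u : bvec N) : algC :=
  (sqrtC 2)^-1 ^+ N * \sum_(v : bvec N) (-1) ^+ (G v (+) bdot u v : nat).

Definition bent (N : nat) (G : bvec N -> bool) : Prop :=
  forall u : bvec N, `|walsh G u| = 1.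

Definition xpart (n : nat) (v : bvec (n + n)) : bvec n := [ffun k => v (lshift n k)].
Definition ypart (n : nat) (v : bvec (n + n)) : bvec n := [ffun k => v (rshift n k)].

Definition gfun (n p : nat) (sigma : {perm bvec n}) (a : 'I_p -> bvec n -> bool)
  (i : nat) (v : bvec (n + n)) : bool :=
  bdot (xpart v) (sigma (ypart v)) (+) \big[addb/false]_(j < p) (zbit i j && a j (ypart v)).

(* Main.v *)
Require Import Defs.
From HB Require Import structures.
From mathcomp Require Import all_boot all_order all_algebra all_fingroup all_field.
From mathcomp Require Import zify.
Import Order.TTheory GRing.Theory Num.Theory.
Local Open Scope ring_scope.
Lemma sgn_bigxor (m : nat) (F : 'I_m -> bool) :
  (-1) ^+ (\big[addb/false]_(k < m) F k : nat) = \prod_(k < m) (-1) ^+ (F k : nat) :> algC.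
Proof.
apply: (big_morph (fun b : bool => (-1) ^+ (b : nat) : algC)).
  by move=> x y; rewrite signr_addb.
by rewrite expr0.
Qed.

Lemma char_sum (N : nat) (w : bvec N) :
  \sum_(x : bvec N) (-1) ^+ (bdot x w : nat) = (w == [ffun=> false])%:R * 2%:R ^+ N :> algC.
Proof.
under eq_bigr do rewrite /bdot sgn_bigxor.
rewrite -(bigA_distr_bigA (fun (k : 'I_N) (b : bool) => (-1) ^+ (b && w k : nat) : algC)).
under eq_bigr do rewrite big_bool /= expr0.
have [->|Hne] := eqVneq w [ffun=> false].
  rewrite mul1r (eq_bigr (fun _ => 2%:R)); last by move=> k _; rewrite ffunE expr0.
  by rewrite prodr_const card_ord.
have [k wk] : exists k, w k.
  apply/existsP; apply: contraR Hne => /existsPn H; apply/eqP/ffunP => k.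
  by rewrite ffunE; exact: negbTE (H k).
by rewrite mul0r (bigD1 k) //= wk expr1 addNr mul0r.
Qed.

Definition bjoin {n : nat} (x y : bvec n) : bvec (n + n)%N :=
  [ffun k => match split k with inl i => x i | inr j => y j end].

Lemma xpart_join n (x y : bvec n) : xpart (bjoin x y) = x.
Proof.
apply/ffunP => k; rewrite !ffunE.
by rewrite (_ : split (lshift n k) = inl k) // -[RHS](@unsplitK n n (inl k)).
Qed.

Lemma ypart_join n (x y : bvec n) : ypart (bjoin x y) = y.
Proof.
apply/ffunP => k; rewrite !ffunE.
by rewrite (_ : split (rshift n k) = inr k) // -[RHS](@unsplitK n n (inr k)).
Qed.

Lemma join_parts n (v : bvec (n + n)%N) : bjoin (xpart v) (ypart v) = v.
Proof.
apply/ffunP => k; rewrite ffunE -[in RHS](splitK k).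
by case: (split k) => i /=; rewrite ffunE.
Qed.

Lemma bdot_split n (u v : bvec (n + n)%N) :
  bdot u v = bdot (xpart u) (xpart v) (+) bdot (ypart u) (ypart v).
Proof.
rewrite /bdot big_split_ord; congr (_ (+) _); apply: eq_bigr => k _; by rewrite !ffunE.
Qed.

Lemma bdot_lin n (x s t : bvec n) :
  bdot x s (+) bdot t x = bdot x [ffun k => s k (+) t k].
Proof.
rewrite /bdot -big_split /=; apply: eq_bigr => k _; rewrite ffunE.
by case: (x k); case: (s k); case: (t k).
Qed.

Lemma xor_eq0 n (s t : bvec n) : ([ffun k => s k (+) t k] == [ffun=> false]) = (s == t).
Proof.
apply/eqP/eqP => [H|->]; apply/ffunP => k.
  by move: (congr1 (fun f : bvec n => f k) H); rewrite !ffunE; case: (s k); case: (t k).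
by rewrite !ffunE addbb.
Qed.

Lemma scal_one n : (sqrtC 2)^-1 ^+ (n + n)%N * 2%:R ^+ n = 1 :> algC.
Proof.
rewrite exprD -exprMn -expr2 exprVn sqrtCK -exprMn mulVf ?expr1n //.
by rewrite pnatr_eq0.
Qed.

Local Open Scope nat_scope.
Lemma bin_digits (m : nat) (b : nat -> bool) :
  (\sum_(j < m) 2^j * b j < 2^m)%N /\
  forall k, (k < m)%N -> odd ((\sum_(j < m) 2^j * b j) %/ 2^k) = b k.
Proof.
elim: m b => [|m IH] b.
  by rewrite big_ord0; split.
have [HS Hd] := IH (fun j => b j.+1).
set S := (\sum_(j < m) 2^j * b j.+1)%N in HS Hd.
have E : (\sum_(i < m) 2 ^ lift ord0 i * b (lift ord0 i) = 2 * S)%N.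
  rewrite /S big_distrr; apply: eq_bigr => j _; by rewrite lift0 expnS -mulnA.
rewrite big_ord_recl E /= expn0 mul1n; split.
  rewrite expnS; case: (b 0%N) => /=; lia.
case=> [_|k Hk].
  by rewrite expn0 divn1 oddD oddb oddM /= addbF.
rewrite expnS divnMA addnC (mulnC 2 S) divnMDl // (@divn_small (b 0%N) 2) ?addn0; last by case: (b 0%N).
exact: Hd.

Qed.


Lemma zbit_shift (i k j : nat) : (i < 2 ^ k)%N ->
  zbit (i + 2 ^ k) j = zbit i j (+) (j == k).
Proof.
move=> Hi; rewrite /zbit.
case: (ltngtP j k) => Hjk.
- have E : (2 ^ k = 2 ^ (k - j) * 2 ^ j)%N by rewrite -expnD subnK // ltnW.
  rewrite E divnDMl ?expn_gt0 // oddD oddX /= addbF.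
  by rewrite (_ : (k - j == 0)%N = false) ?orbF ?addbF //; apply/negbTE; rewrite subn_eq0 -ltnNge.
- have H1 : (i + 2 ^ k < 2 ^ j)%N.
    apply: (@leq_trans (2 ^ k.+1)); last by rewrite leq_exp2l.
    by rewrite expnS mul2n -addnn ltn_add2r.
  have H2 : (i < 2 ^ j)%N by exact: leq_ltn_trans (leq_addr _ _) H1.
  rewrite (divn_small H1) (divn_small H2).
  by [].
- by rewrite Hjk -[X in (i + X)%N](mul1n (2 ^ k)) divnDMl ?expn_gt0 // divn_small // addn1.
Qed.

Local Open Scope ring_scope.
Definition cf {n p : nat} (a : 'I_p -> bvec n -> bool) (i : nat) (y : bvec n) : bool :=
  \big[addb/false]_(j < p) (zbit i j && a j y).

Lemma xor4 (A B C D : bool) : (A (+) C) (+) (B (+) D) = (C (+) D) (+) (A (+) B).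
Proof. by case: A; case: B; case: C; case: D. Qed.

Lemma walsh_formula (n p : nat) (sigma : {perm bvec n}) (a : 'I_p -> bvec n -> bool)
  (i : nat) (u : bvec (n + n)%N) :
  walsh (gfun sigma a i) u =
  (-1) ^+ (cf a i ((sigma^-1)%g (xpart u)) (+) bdot (ypart u) ((sigma^-1)%g (xpart u)) : nat).
Proof.
set y0 := (sigma^-1)%g (xpart u).
rewrite /walsh.
rewrite (reindex (fun pr : bvec n * bvec n => bjoin pr.2 pr.1)); last first.
  apply: onW_bij; exists (fun v => (ypart v, xpart v)) => [[y x]|v] /=.
    by rewrite xpart_join ypart_join.
  by rewrite join_parts.
rewrite -(pair_big xpredT xpredT (fun y x => (-1) ^+ (gfun sigma a i (bjoin x y) (+) bdot u (bjoin x y) : nat) : algC)) /=.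
under eq_bigr => y _.
  under eq_bigr => x _ do rewrite /gfun bdot_split !xpart_join !ypart_join xor4 bdot_lin signr_addb.
  rewrite -big_distrr /= char_sum xor_eq0.
  over.
rewrite /= (bigD1 y0) //=.
rewrite [X in _ + X]big1 ?addr0; last first.
  move=> y Hy; rewrite (_ : (sigma y == xpart u) = false) ?mul0r ?mulr0 //.
  apply/negbTE; apply: contra Hy => /eqP H; by rewrite /y0 -H permK.
rewrite /y0 permKV eqxx mul1r mulrA mulrC mulrA.
by rewrite (mulrC (2%:R ^+ n)) scal_one mul1r.
Qed.

Lemma sign_prod (A b e : bool) :
  (-1) ^+ (A (+) e : nat) * (-1) ^+ ((A (+) b) (+) e : nat) = (-1) ^+ (b : nat) :> algC.
Proof. by case: A; case: b; case: e; rewrite /= ?expr0 ?expr1 ?mulN1r ?opprK ?mulr1 ?mul1r. Qed.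

Lemma andb_xorl (x y z : bool) : (x (+) y) && z = (x && z) (+) (y && z).
Proof. by case: x; case: y; case: z. Qed.

Theorem mainTheorem5 (q n p : nat) (hq : (2 <= q)%N) (hqeven : ~~ odd q)
  (hn : (1 <= n)%N) (hp : (1 <= p)%N)
  (sigma : {perm bvec n}) (g : bvec n -> 'Z_q) (a : 'I_p -> bvec n -> bool)
  (hg : forall y : bvec n, g y = ((\sum_(j < p) 2 ^ j * a j y)%N)%:R) :
  (forall i : nat, (i < 2 ^ p)%N -> bent (gfun sigma a i)) /\
  (forall u : bvec (n + n), exists r : nat, exists eps : algC,
      [/\ (r < 2 ^ p)%N, eps = 1 \/ eps = -1 &
          forall i : nat, (i < 2 ^ p)%N ->
            walsh (gfun sigma a i) u = eps * hadamard p r i]) /\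
  (forall (u : bvec (n + n)) (t : nat), (1 <= t <= p)%N ->
      exists c : algC, (c = 1 \/ c = -1) /\
        forall i : nat, (i < 2 ^ t.-1)%N ->
          walsh (gfun sigma a i) u * walsh (gfun sigma a (i + 2 ^ t.-1)) u = c).
Proof.
split.
  by move=> i _ u; rewrite walsh_formula normr_sign.
split.
  move=> u; set y0 := (sigma^-1)%g (xpart u).
  pose b := fun j => if insub j is Some k then a k y0 else false.
  have [Hr Hd] := bin_digits p b.
  set r := (\sum_(j < p) 2 ^ j * b j)%N in Hr Hd.
  have Hz : forall j : 'I_p, zbit r j = a j y0.
    by move=> j; rewrite /zbit Hd // /b valK.
  exists r, ((-1) ^+ (bdot (ypart u) y0 : nat)); split => //.
    by case: (bdot _ _); [right; rewrite expr1 | left; rewrite expr0].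
  move=> i _; rewrite walsh_formula signr_addb mulrC /hadamard /cf; congr (_ * (_ ^+ nat_of_bool _)).
  by apply: eq_bigr => j _; rewrite Hz andbC.
move=> u t /andP [t1 tp]; set y0 := (sigma^-1)%g (xpart u).
have kp : (t.-1 < p)%N by rewrite prednK // (leq_trans t1 tp).
exists ((-1) ^+ (a (Ordinal kp) y0 : nat)); split.
  by case: (a _ _); [right; rewrite expr1 | left; rewrite expr0].
move=> i Hi; rewrite !walsh_formula.
have -> : cf a (i + 2 ^ t.-1) y0 = cf a i y0 (+) a (Ordinal kp) y0.
  rewrite /cf.
  under eq_bigr do rewrite zbit_shift // andb_xorl.
  rewrite big_split /=; congr (_ (+) _).
  rewrite (bigD1 (Ordinal kp)) //= eqxx big1 ?addbF // => j Hj.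
  rewrite (_ : (j == t.-1 :> nat) = false) //; apply/negbTE; apply: contra Hj => /eqP H.
  by apply/eqP; apply: val_inj.
exact: sign_prod.
Qed.
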